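(* Let $H$ be a Hermitian operator on a $d$-dimensional Hilbert space with spectral decomposition $H=\sum_{i=1}^M\lambda_i\Pi_i$, where $M\ge 2$, $\lambda_M>\cdots>\lambda_1$ are the distinct eigenvalues and $\Pi_i$ the spectral projections. Let $\Delta=\lambda_2-\lambda_1$, $d_G=\operatorname{Tr}[\Pi_1]$, and $\varepsilon\in(0,1)$. If $$\beta=\frac{1}{\Delta}\ln\!\left[\left(\frac{1-\varepsilon}{\varepsilon}\right)\left(\frac{d-d_G}{d_G}\right)\right]$$ and $\beta\ge 0$, then $$F\!\left(\frac{e^{-\beta H}}{\operatorname{Tr}[e^{-\beta H}]},\frac{\Pi_1}{\operatorname{Tr}[\Pi_1]}\right)\ge 1-\varepsilon.$$
   Context: The fidelity of states $\rho,\sigma$ is $F(\rho,\sigma)=\|\sqrt{\rho}\sqrt{\sigma}\|_1^2$, where $\|A\|_1=\operatorname{Tr}[\sqrt{A^\dagger A}]$. *)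

(* Defs.v *)
(* Hilbert space C^d with C = R[i] (complex numbers over an abstract R : realType). *)
From HB Require Import structures.
From mathcomp Require Import all_boot all_order all_algebra.
From mathcomp Require Import all_classical all_reals all_analysis.
From mathcomp Require Import complex.
Set Implicit Arguments. Unset Strict Implicit. Unset Printing Implicit Defensive.
Import Order.TTheory GRing.Theory Num.Theory.
Import numFieldNormedType.Exports.
Local Open Scope ring_scope.
Local Open Scope sesquilinear_scope.

Section QDefs.
Variables (R : realType) (d : nat).
Local Notation C := R[i].

Definition herm (A : 'M[C]_d) : Prop := A ^t* = A.

Definition psd (A : 'M[C]_d) : Prop :=
  herm A /\ forall v : 'rV[C]_d, 0 <= (v *m A *m v ^t*) 0 0.

(* The (unique) positive semidefinite square root of a PSD matrix A
   (chosen by classical choice; defined for every A, meaningful for PSD A). *)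
Definition psd_sqrt (A : 'M[C]_d) : 'M[C]_d :=
  xget 0 [set X : 'M[C]_d | psd X /\ X *m X = A].

Definition trnorm (A : 'M[C]_d) : C := \tr (psd_sqrt (A ^t* *m A)).

Definition fidelity (rho sigma : 'M[C]_d) : C :=
  (trnorm (psd_sqrt rho *m psd_sqrt sigma)) ^+ 2.

Definition expm (A : 'M[C]_d) : 'M[C]_d :=
  limn (series (fun k : nat => (k`!%:R)^-1 *: iter k (mulmx A) 1%:M)).

End QDefs.

(* Main.v *)
Require Import Defs.
From HB Require Import structures.
From mathcomp Require Import all_boot all_order all_algebra.
From mathcomp Require Import all_classical all_reals all_analysis.
From mathcomp Require Import complex.
From mathcomp Require Import ring lra.
Import Order.TTheory GRing.Theory Num.Theory.
Import numFieldNormedType.Exports.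
Local Open Scope ring_scope.

Module Aux.
Local Open Scope sesquilinear_scope.
Section LA.
Variables (R : realType) (n : nat).
Local Notation C := R[i].
Implicit Types (A B : 'M[C]_n) (u v w : 'rV[C]_n).

Lemma adjM m p q (A : 'M[C]_(m, p)) (B : 'M[C]_(p, q)) :
  (A *m B)^t* = B^t* *m A^t*.
Proof. by rewrite trmx_mul map_mxM. Qed.

Lemma adjD m p (A B : 'M[C]_(m, p)) : (A + B)^t* = A^t* + B^t*.
Proof. by rewrite linearD map_mxD. Qed.

Lemma adjZ m p a (A : 'M[C]_(m, p)) : (a *: A)^t* = a^* *: A^t*.
Proof. by rewrite linearZ map_mxZ. Qed.

Lemma dot_ge0 k (u : 'rV[C]_k) : 0 <= (u *m u^t*) 0 0.
Proof.
rewrite mxE; apply: sumr_ge0 => j _; rewrite !mxE; exact: mul_conjC_ge0.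
Qed.

Lemma dot_eq0 k (u : 'rV[C]_k) : (u *m u^t*) 0 0 = 0 -> u = 0.
Proof.
rewrite mxE => /eqP; rewrite psumr_eq0 => [/allP H|j _]; last first.
  by rewrite !mxE mul_conjC_ge0.
apply/rowP => j; rewrite mxE.
have := H j (mem_index_enum j); rewrite /= !mxE mul_conjC_eq0.
by move/eqP.
Qed.

Lemma adj_self0 m p (A : 'M[C]_(m, p)) : A^t* *m A = 0 -> A = 0.
Proof.
move=> H.
have HA : A^t* = 0.
  apply/row_matrixP => i; rewrite row0 rowE.
  apply: dot_eq0.
  by rewrite adjM trmxCK mulmxA -(mulmxA (delta_mx 0 i)) H mulmx0 mul0mx mxE.
by rewrite -(trmxCK A) HA /= trmx0 map_mx0.
Qed.

Lemma ee_entry B (i j : 'I_n) :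
  ((delta_mx 0 i : 'rV[C]_n) *m B *m (delta_mx 0 j : 'rV[C]_n)^t*) 0 0 = B i j.
Proof.
rewrite trmx_delta map_delta_mx -rowE -colE !mxE.
done.
Qed.

Lemma polar B : (forall v, (v *m B *m v^t*) 0 0 = 0) -> B = 0.
Proof.
move=> H.
pose f u w := (u *m B *m w^t*) 0 0.
have fD : forall u w, f (u + w) (u + w) = f u u + f u w + f w u + f w w.
  move=> u w; rewrite /f adjD !mulmxDl !mulmxDr !mxE.
  by rewrite !addrA.
have fZr : forall u w a, f u (a *: w) = a^* * f u w.
  by move=> u w a; rewrite /f adjZ -scalemxAr mxE.
have fZl : forall u w a, f (a *: u) w = a * f u w.
  by move=> u w a; rewrite /f -!scalemxAl mxE.
apply/matrixP => i j; rewrite mxE.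
have h1 := H (delta_mx 0 i + delta_mx 0 j).
have h2 := H (delta_mx 0 i + 'i *: delta_mx 0 j).
rewrite -/(f _ _) fD /f !H !ee_entry add0r addr0 in h1.
rewrite -/(f _ _) fD !fZr !fZl /f !H !ee_entry add0r !mulr0 addr0 in h2.
move: h2; rewrite conjCi mulNr addrC -mulrBr => /eqP; rewrite mulf_eq0 (negbTE (neq0Ci _)) /= subr_eq0 => /eqP E.
move/eqP: h1; rewrite E -mulr2n mulrn_eq0 /= => /eqP //.
Qed.

End LA.

Section CC.
Local Open Scope complex_scope.
Local Open Scope classical_set_scope.

Lemma normC_real (R : realType) (x : R) : `|x%:C%C| = `|x|%:C%C.
Proof. by rewrite normc_def /= expr0n addr0 sqrtr_sqr. Qed.

Lemma cvgC (R : realType) (u : nat -> R) (l : R) :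
  u @ \oo --> l -> (fun n => ((u n)%:C%C : (R[i] : numFieldType))) @ \oo --> (l%:C%C : (R[i] : numFieldType)).
Proof.
move=> /cvgrPdist_lt H; apply/cvgrPdist_lt => -[a b]; rewrite ltcE /= => /andP[/eqP -> a0].
near=> t; rewrite -rmorphB normC_real.
change (`|l - u t|%:C%C < a%:C%C); rewrite ltcR.
by near: t; apply: H.
Unshelve. all: by end_near.
Qed.
End CC.


Section Combo.
Variables (R : realType) (n M : nat) (P : nat -> 'M[R[i]]_n).
Local Notation C := R[i].
Hypothesis hP : forall i, (i < M)%N -> P i ^t* = P i /\ P i *m P i = P i.
Hypothesis hO : forall i j, (i < M)%N -> (j < M)%N -> i <> j -> P i *m P j = 0.
Hypothesis hS : \sum_(i < M) P i = 1%:M.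

Definition combo (a : nat -> C) : 'M[C]_n := \sum_(i < M) a i *: P i.

Lemma P_combo_l (i : 'I_M) a : P i *m combo a = a i *: P i.
Proof.
rewrite /combo mulmx_sumr (bigD1 i) //= big1 ?addr0.
  by rewrite -scalemxAr (proj2 (hP _ (ltn_ord i))).
move=> j ji; rewrite -scalemxAr hO ?scaler0 //.
by move=> E; move: ji; rewrite -(inj_eq val_inj) /= E eqxx.
Qed.

Lemma P_combo_r (i : 'I_M) a : combo a *m P i = a i *: P i.
Proof.
rewrite /combo mulmx_suml (bigD1 i) //= big1 ?addr0.
  by rewrite -scalemxAl (proj2 (hP _ (ltn_ord i))).
move=> j ji; rewrite -scalemxAl hO ?scaler0 //.
by move=> E; move: ji; rewrite -(inj_eq val_inj) /= E eqxx.
Qed.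

Lemma combo_mul a b : combo a *m combo b = combo (fun i => a i * b i).
Proof.
rewrite {1}/combo mulmx_suml; apply: eq_bigr => i _.
by rewrite -scalemxAl P_combo_l scalerA.
Qed.

Lemma combo1 : combo (fun _ => 1) = 1%:M.
Proof. by rewrite -hS; apply: eq_bigr => i _; rewrite scale1r. Qed.

Lemma combo_pow a k : iter k (mulmx (combo a)) 1%:M = combo (fun i => a i ^+ k).
Proof.
elim: k => [|k IH] /=.
  by rewrite -combo1; apply: eq_bigr => i _; rewrite expr0.
by rewrite IH combo_mul; apply: eq_bigr => i _; rewrite exprS.
Qed.

Lemma combo_adj a : (combo a)^t* = combo (fun i => (a i)^*).
Proof.
apply/matrixP => r c; rewrite /combo !mxE !summxE rmorph_sum.
apply: eq_bigr => i _.
rewrite !mxE rmorphM /=; congr (_ * _).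
by rewrite -{1}(proj1 (hP _ (ltn_ord i))) !mxE conjCK.
Qed.

Lemma combo_tr a : \tr (combo a) = \sum_(i < M) a i * \tr (P i).
Proof. rewrite /combo raddf_sum; apply: eq_bigr => i _; exact: mxtraceZ. Qed.

Lemma quadP (i : 'I_M) (v : 'rV[C]_n) : 0 <= (v *m P i *m v^t*) 0 0.
Proof.
have [h1 h2] := hP _ (ltn_ord i).
rewrite -h2 -{2}h1 mulmxA -(mulmxA _ _ (_ ^t*)) -adjM; exact: dot_ge0.
Qed.

Lemma combo_quad a (v : 'rV[C]_n) :
  (v *m combo a *m v^t*) 0 0 = \sum_(i < M) a i * (v *m P i *m v^t*) 0 0.
Proof.
rewrite /combo mulmx_sumr mulmx_suml summxE; apply: eq_bigr => i _.
by rewrite -scalemxAr -scalemxAl mxE.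
Qed.

Lemma combo_psd a : (forall i, (i < M)%N -> 0 <= a i) -> psd (combo a).
Proof.
move=> ha; split.
  rewrite /herm combo_adj; apply: eq_bigr => i _.
  by rewrite geC0_conj // ha.
move=> v; rewrite combo_quad; apply: sumr_ge0 => i _.
by rewrite mulr_ge0 ?ha ?quadP.
Qed.

Lemma split_PXP (X : 'M[C]_n) :
  X = \sum_(i < M) \sum_(j < M) P i *m X *m P j.
Proof.
rewrite {1}(_ : X = 1%:M *m X *m 1%:M); last by rewrite mul1mx mulmx1.
rewrite -hS !mulmx_suml; apply: eq_bigr => i _.
by rewrite mulmx_sumr.
Qed.

Lemma sqrt_unique (c : nat -> C) (X : 'M[C]_n) :
  (forall i, (i < M)%N -> 0 <= c i) ->
  psd X -> X *m X = combo c -> X = combo (fun i => sqrtC (c i)).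
Proof.
move=> hc [hX qX] XX.
set s := fun i => sqrtC (c i).
set Y := combo s.
have hs : forall i, (i < M)%N -> 0 <= s i by move=> i /hc; rewrite /s sqrtC_ge0.
have [hY qY] := combo_psd _ hs.
have YY : Y *m Y = combo c.
  rewrite combo_mul; apply: eq_bigr => i _; by rewrite -expr2 sqrtCK.
have comm : forall i j : 'I_M, s j *: (P i *m X *m P j) = s i *: (P i *m X *m P j).
  move=> i j; have [E|NE] := eqVneq (c i) (c j); first by rewrite /s E.
  suff -> : P i *m X *m P j = 0 by rewrite !scaler0.
  have : (c i - c j) *: (P i *m X *m P j) = 0.
    apply/eqP; rewrite scalerBl subr_eq0; apply/eqP.
    have L : P i *m (X *m X) *m X *m P j = c i *: (P i *m X *m P j).
      by rewrite XX P_combo_l -!scalemxAl.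
    have L2 : P i *m X *m ((X *m X) *m P j) = c j *: (P i *m X *m P j).
      by rewrite XX P_combo_r -scalemxAr.
    by rewrite -L -L2 !mulmxA.
  by move/eqP; rewrite scaler_eq0 subr_eq0 (negbTE NE) /= => /eqP.
have XY : X *m Y = Y *m X.
  rewrite {1}(split_PXP X) {2}(split_PXP X) mulmx_suml mulmx_sumr.
  apply: eq_bigr => i _; rewrite mulmx_suml mulmx_sumr; apply: eq_bigr => j _.
  rewrite /Y -mulmxA P_combo_l !mulmxA P_combo_r -scalemxAr -!scalemxAl comm //.
have [D DXY] : {D | D = X - Y} by exists (X - Y).
have hD : D^t* = D by rewrite DXY linearB map_mxB /= hX hY.
have D0 : D *m (X + Y) = 0.
  by rewrite DXY mulmxDr !mulmxBl XX YY XY addrA subrK subrr.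
have q1 : forall v : 'rV[C]_n, (v *m (D *m X *m D) *m v^t*) 0 0 = 0.
  move=> v.
  have e : forall Z, (v *m (D *m Z *m D) *m v^t*) = (v *m D) *m Z *m (v *m D)^t*.
    by move=> Z; rewrite adjM hD !mulmxA.
  have a1 := qX (v *m D); have a2 := qY (v *m D).
  have : (v *m (D *m X *m D) *m v^t*) 0 0 + (v *m (D *m Y *m D) *m v^t*) 0 0 = 0.
    have S : D *m X *m D + D *m Y *m D = 0 by rewrite -mulmxDl -mulmxDr D0 mul0mx.
    have E : v *m (D *m X *m D) *m (v^t*) + v *m (D *m Y *m D) *m (v^t*) = 0.
      by rewrite -mulmxDl -mulmxDr S mulmx0 mul0mx.
    have := f_equal (fun A : 'M[C]_(1,1) => A 0 0) E.
    by rewrite mxE => ->; rewrite mxE.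
  rewrite !e => /eqP; rewrite paddr_eq0 // => /andP[/eqP -> _] //.
have q2 : forall v : 'rV[C]_n, (v *m (D *m Y *m D) *m v^t*) 0 0 = 0.
  move=> v.
  have e : forall Z, (v *m (D *m Z *m D) *m v^t*) = (v *m D) *m Z *m (v *m D)^t*.
    by move=> Z; rewrite adjM hD !mulmxA.
  have a1 := qX (v *m D); have a2 := qY (v *m D).
  have : (v *m (D *m X *m D) *m v^t*) 0 0 + (v *m (D *m Y *m D) *m v^t*) 0 0 = 0.
    have S : D *m X *m D + D *m Y *m D = 0 by rewrite -mulmxDl -mulmxDr D0 mul0mx.
    have E : v *m (D *m X *m D) *m (v^t*) + v *m (D *m Y *m D) *m (v^t*) = 0.
      by rewrite -mulmxDl -mulmxDr S mulmx0 mul0mx.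
    have := f_equal (fun A : 'M[C]_(1,1) => A 0 0) E.
    by rewrite mxE => ->; rewrite mxE.
  rewrite !e => /eqP; rewrite paddr_eq0 // => /andP[_ /eqP ->] //.
have E1 := polar _ _ _ q1; have E2 := polar _ _ _ q2.
have D3 : D *m D *m D = 0.
  by rewrite {2}DXY mulmxBr mulmxBl E1 E2 subrr.
have D2 : D *m D = 0.
  by apply: adj_self0; rewrite adjM hD mulmxA D3 mul0mx.
apply/eqP; rewrite -subr_eq0 -DXY; apply/eqP; apply: adj_self0.
by rewrite hD.
Qed.


Local Open Scope classical_set_scope.
Lemma expm_combo (r : nat -> R) :
  expm (combo (fun i => (r i)%:C%C)) = combo (fun i => (expR (r i))%:C%C).
Proof.
rewrite /expm.
have E : series (fun k => (k`!%:R)^-1 *: iter k (mulmx (combo (fun i => (r i)%:C%C))) 1%:M)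
  = fun N => combo (fun i => (series (exp_coeff (r i)) N)%:C%C).
  apply/funext => N; rewrite /series /=.
  transitivity (\sum_(0 <= k < N) \sum_(i < M) ((exp_coeff (r i) k)%:C%C *: P i)).
    apply: eq_bigr => k _; rewrite combo_pow /combo scaler_sumr; apply: eq_bigr => i _.
    rewrite scalerA; congr (_ *: _).
    by rewrite /exp_coeff /= rmorphM rmorphXn fmorphV rmorph_nat mulrC.
  rewrite exchange_big /=; apply: eq_bigr => i _.
  by rewrite rmorph_sum scaler_suml.
rewrite E; apply: (cvg_lim (@norm_hausdorff _ _)); rewrite /combo.
apply: cvg_big => //; first exact: add_continuous.
move=> i _; apply: cvgZr_tmp; apply: cvgC.
exact: is_cvg_series_exp_coeff.
Qed.

Lemma psd_sqrt_combo (c : nat -> R[i]) : (forall i, (i < M)%N -> 0 <= c i) ->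
  psd_sqrt (combo c) = combo (fun i => sqrtC (c i)).
Proof.
move=> hc; rewrite /psd_sqrt; apply: xget_unique.
  split; first by apply: combo_psd => i /hc; rewrite sqrtC_ge0.
  by rewrite combo_mul; apply: eq_bigr => i _; rewrite -expr2 sqrtCK.
by move=> Y [hY YY]; apply: sqrt_unique.
Qed.

Lemma diagP (i : 'I_M) (j : 'I_n) :
  P i j j = (((delta_mx 0 j : 'rV[R[i]]_n) *m P i) *m ((delta_mx 0 j : 'rV[R[i]]_n) *m P i)^t*) 0 0.
Proof.
have [h1 h2] := hP _ (ltn_ord i).
by rewrite adjM h1 mulmxA -(mulmxA (delta_mx 0 j)) h2 ee_entry.
Qed.

Lemma tr_ge0 (i : 'I_M) : 0 <= \tr (P i).
Proof. by apply: sumr_ge0 => j _; rewrite diagP dot_ge0. Qed.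

Lemma tr_gt0 (i : 'I_M) : P i != 0 -> 0 < \tr (P i).
Proof.
move=> Pn0; rewrite lt_def tr_ge0 andbT; apply: contra Pn0 => /eqP.
move/eqP; rewrite psumr_eq0 => [/allP H|j _]; last by rewrite diagP dot_ge0.
apply/eqP/row_matrixP => j; rewrite row0 rowE; apply: dot_eq0.
by rewrite -diagP; apply/eqP; exact: (H j (mem_index_enum j)).
Qed.

Lemma ge0_realC (z : R[i]) : 0 <= z -> z = (complex.Re z)%:C%C /\ 0 <= complex.Re z.
Proof. by case: z => a b; rewrite lecE /= => /andP[/eqP -> ->]. Qed.

Lemma main_sec (lam : nat -> R) (eps beta : R) :
  (1 < M)%N ->
  (forall i j, (i < j < M)%N -> lam i < lam j) ->
  P 0 != 0 ->
  0 < eps < 1 ->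
  beta = (lam 1%N - lam 0%N)^-1 *
         ln (((1 - eps) / eps) *
             ((n%:R - complex.Re (\tr (P 0%N))) / complex.Re (\tr (P 0%N)))) ->
  0 <= beta ->
  (1 - eps)%:C%C <=
    fidelity ((\tr (expm (- beta%:C%C *: combo (fun i => (lam i)%:C%C))))^-1 *:
                 expm (- beta%:C%C *: combo (fun i => (lam i)%:C%C)))
             ((\tr (P 0%N))^-1 *: P 0%N).
Proof.
move=> hM hlam hP0 /andP[e0 e1] hb hb0.
pose i0 : 'I_M := Ordinal (ltnW hM).
pose mu i := - beta * lam i.
have HA : - beta%:C%C *: combo (fun i => (lam i)%:C%C) = combo (fun i => (mu i)%:C%C).
  rewrite /combo scaler_sumr; apply: eq_bigr => i _.
  by rewrite scalerA /mu rmorphM rmorphN.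
rewrite HA expm_combo.
pose e i := expR (mu i).
pose tau i := complex.Re (\tr (P i)).
have htau : forall i : 'I_M, \tr (P i) = (tau i)%:C%C /\ 0 <= tau i.
  by move=> i; apply: ge0_realC; exact: tr_ge0.
pose ZR := \sum_(i < M) e i * tau i.
have ZE : \tr (combo (fun i => (expR (mu i))%:C%C)) = ZR%:C%C.
  rewrite combo_tr rmorph_sum; apply: eq_bigr => i _.
  by rewrite (proj1 (htau i)) rmorphM.
rewrite ZE.
have rhoE : (ZR%:C%C)^-1 *: combo (fun i => (expR (mu i))%:C%C)
   = combo (fun i => (ZR%:C%C)^-1 * (expR (mu i))%:C%C).
  by rewrite /combo scaler_sumr; apply: eq_bigr => i _; rewrite scalerA.
pose c i := if i == 0%N then (\tr (P 0))^-1 else 0.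
have sigE : (\tr (P 0))^-1 *: P 0 = combo c.
  rewrite /combo (bigD1 i0) //= big1 ?addr0 => [|j jn]; first by rewrite /c eqxx.
  rewrite /c ifF ?scale0r //; apply/negbTE; by move: jn; rewrite -(inj_eq val_inj).
have tr0 : 0 < \tr (P 0) := tr_gt0 i0 hP0.
have tau0 : 0 < tau i0.
  by move: tr0; rewrite (proj1 (htau i0)) ltcE /= => /andP[_].
have ZR0 : 0 < ZR.
  rewrite /ZR (bigD1 i0) //=.
  have h1 : 0 < e i0 * tau i0 by rewrite mulr_gt0 // expR_gt0.
  have h2 : 0 <= \sum_(i < M | i != i0) e i * tau i.
    by apply: sumr_ge0 => i _; rewrite mulr_ge0 ?expR_ge0 ?(proj2 (htau i)).
  rewrite /e /= in h1 h2 *; lra.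
rewrite /fidelity /trnorm rhoE sigE !psd_sqrt_combo; first last.
- by move=> i _; rewrite mulr_ge0 // ?invr_ge0 ler0c ?expR_ge0 // ltW.
- by move=> i _; rewrite /c; case: ifP => _ //; rewrite invr_ge0 ltW.
rewrite combo_mul combo_adj combo_mul psd_sqrt_combo; last first.
  by move=> i _; rewrite mulrC mul_conjC_ge0.
rewrite combo_tr (bigD1 i0) //= big1 ?addr0; last first.
  move=> j jn; rewrite /c ifF ?sqrtC0 ?mulr0 ?conjC0 ?mul0r ?sqrtC0 ?mul0r //.
  by apply/negbTE; move: jn; rewrite -(inj_eq val_inj).
have ge0a : 0 <= ZR%:C%C^-1 * (expR (mu 0%N))%:C%C.
  by rewrite mulr_ge0 // ?invr_ge0 ler0c ?expR_ge0 // ltW.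
have ge0c : 0 <= c 0%N by rewrite /c eqxx invr_ge0 ltW.
have g0 : 0 <= sqrtC (ZR%:C%C^-1 * (expR (mu 0%N))%:C%C) * sqrtC (c 0%N).
  by rewrite mulr_ge0 // sqrtC_ge0.
rewrite geC0_conj // -expr2 sqrCK // !exprMn !sqrtCK /c eqxx.
rewrite (proj1 (htau i0)) /=.
have tn0 : (tau i0)%:C%C != 0 by rewrite (negbTE (lt0r_neq0 _)) // ltcR.
rewrite expr2 !mulrA mulfVK // -fmorphV -!rmorphM lecR.
have hsum : \sum_(i < M) tau i = n%:R.
  apply: (@complexI R); rewrite rmorph_sum rmorph_nat.
  transitivity (\sum_(i < M) \tr (P i)).
    by apply: eq_bigr => i _; rewrite (proj1 (htau i)).
  by rewrite -raddf_sum /= hS mxtrace1.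
pose W := \sum_(i < M | i != i0) e i * tau i.
pose S := \sum_(i < M | i != i0) tau i.
have ZRE : ZR = e i0 * tau i0 + W by rewrite /ZR (bigD1 i0).
have SE : S = n%:R - tau 0%N by rewrite -hsum (bigD1 i0) //= addrAC subrr add0r.
have S0 : 0 <= S by apply: sumr_ge0 => i _; exact: (proj2 (htau i)).
have W0 : 0 <= W by apply: sumr_ge0 => i _; rewrite mulr_ge0 ?expR_ge0 ?(proj2 (htau i)).
have hW : W <= expR (mu 1%N) * S.
  rewrite /W /S mulr_sumr; apply: ler_sum => i ni0.
  rewrite ler_wpM2r ?(proj2 (htau i)) // /e ler_expR /mu !mulNr lerN2.
  apply: ler_wpM2l => //.
  have i1 : (1 <= i)%N by move: ni0; rewrite -(inj_eq val_inj) /= lt0n.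
  move: i1; rewrite leq_eqVlt => /orP[/eqP <- //|i1].
  by apply: ltW; apply: hlam; rewrite i1 ltn_ord.
have Dl : 0 < lam 1%N - lam 0%N by rewrite subr_gt0; apply: hlam; rewrite hM.
have hC : (1 - eps) * expR (mu 1%N) * S <= eps * e i0 * tau i0.
  have [->|Sn0] := eqVneq S 0.
    by rewrite mulr0 mulr_ge0 ?mulr_ge0 ?expR_ge0 // ltW.
  have Sp : 0 < S by rewrite lt_def Sn0 S0.
  pose K := ((1 - eps) / eps) * (S / tau i0).
  have Kp : 0 < K by rewrite /K mulr_gt0 // divr_gt0 // subr_gt0.
  have hbK : beta * (lam 1%N - lam 0%N) = ln K.
    by rewrite hb -SE mulrAC mulVf ?mul1r // gt_eqF.
  have E1 : expR (mu 1%N) = e i0 * K^-1.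
    have eK : K^-1 = expR (- ln K) by rewrite expRN lnK // posrE.
    rewrite eK /e /mu /= -expRD; congr expR.
    by rewrite -hbK; ring.
  rewrite E1 /K /= le_eqVlt; apply/orP; left; apply/eqP.
  field.
  apply/and4P; split; [exact: (lt0r_neq0 tau0) | exact: (lt0r_neq0 e0) | exact: Sn0 |].
  by rewrite subr_eq0 gt_eqF.
rewrite -mulrA mulrC ler_pdivlMr // ZRE.
have e1' : 0 < 1 - eps by rewrite subr_gt0.
have hW' : 0 <= expR (mu 1%N) * S - W by rewrite subr_ge0.
have h := mulr_ge0 (ltW e1') hW'.
rewrite /e /= in h hC *.
nra.
Qed.

End Combo.

End Aux.
Import Aux.

Local Open Scope complex_scope.

(* Eigenvalues/projections are indexed 0..M-1 (paper: 1..M);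
   lambda 0 is the smallest eigenvalue, Pi 0 the ground-space projection. *)
Theorem corollary2 (R : realType) (d M : nat) (H : 'M[R[i]]_d)
    (lambda : nat -> R) (Pi : nat -> 'M[R[i]]_d) (eps beta : R) :
  (2 <= M)%N ->
  herm H ->
  (* spectral decomposition H = sum_i lambda_i Pi_i with distinct eigenvalues *)
  (forall i j, (i < j < M)%N -> lambda i < lambda j) ->
  (forall i, (i < M)%N -> herm (Pi i) /\ Pi i *m Pi i = Pi i /\ Pi i != 0) ->
  (forall i j, (i < M)%N -> (j < M)%N -> i <> j -> Pi i *m Pi j = 0) ->
  \sum_(i < M) Pi i = 1%:M ->
  H = \sum_(i < M) (lambda i)%:C *: Pi i ->
  0 < eps < 1 ->
  beta = (lambda 1%N - lambda 0%N)^-1 *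
         ln (((1 - eps) / eps) *
             ((d%:R - complex.Re (\tr (Pi 0%N))) / complex.Re (\tr (Pi 0%N)))) ->
  0 <= beta ->
  (1 - eps)%:C <=
    fidelity ((\tr (expm (- beta%:C *: H)))^-1 *: expm (- beta%:C *: H))
             ((\tr (Pi 0%N))^-1 *: Pi 0%N).
Proof.
Proof.
move=> hM hH hlam hP hO hS HE he hb hb0.
have hP' : forall i, (i < M)%N -> herm (Pi i) /\ Pi i *m Pi i = Pi i.
  by move=> i hi; have [a [b _]] := hP i hi.
have hP0 : Pi 0%N != 0 by have [_ [_ ?]] := hP 0%N (leq_trans (isT : (0 < 2)%N) hM).
rewrite HE.
exact: (@main_sec R d M Pi hP' hO hS lambda eps beta hM hlam hP0 he hb hb0).
Qed.
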